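(* Let $U,V,X$ be random variables with $U,V$ taking values in finite sets $\mathcal{U},\mathcal{V}$ and $X$ taking values in $\mathcal{X}=\{0,1,\dots,m-1\}$. Define random variables $U^*$ on $\mathcal{U}\times\{0,\dots,m-1\}$, $V^*$ on $\mathcal{V}\times\{0,\dots,m-1\}$ and $X^*$ on $\mathcal{X}$ (writing $u_i=(u,i)$, $v_j=(v,j)$) by $$P(U^*=u_i,V^*=v_j)=\tfrac1m P(U=u,V=v,X=(i-j)_m),$$ $$P(X^*=k\mid U^*=u_i,V^*=v_j)=\begin{cases}1 & k=(i-j)_m\\ 0&\text{otherwise,}\end{cases}$$ where $(l)_m$ denotes the remainder of $l$ modulo $m$. Then for all $u\in\mathcal{U}$, $v\in\mathcal{V}$ and $0\le i,k\le m-1$: (i) $P(U^*=u_i)=\frac1m P(U=u)$; (ii) $P(V^*=v_i)=\frac1m P(V=v)$; (iii) $P(X^*=k\mid U^*=u_i)=P(X=k\mid U=u)$ whenever $P(U=u)>0$; (iv) $P(X^*=k\mid V^*=v_i)=P(X=k\mid V=v)$ whenever $P(V=v)>0$. *)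

(* Defs.v *)
From HB Require Import structures.
From mathcomp Require Import all_boot all_order all_algebra.
Set Implicit Arguments. Unset Strict Implicit. Unset Printing Implicit Defensive.
Import Order.TTheory GRing.Theory Num.Theory.
Local Open Scope ring_scope.

Section Defs.
Variables (R : realFieldType) (U V : finType) (m : nat).

Lemma ord_pos (i : 'I_m) : (0 < m)%N.
Proof. exact: leq_ltn_trans (leq0n i) (ltn_ord i). Qed.

Definition subm (i j : 'I_m) : 'I_m :=
  Ordinal (ltn_pmod (i + m - j)%N (ord_pos i)).

(* joint pmf of (U,V,X): p u v x = P(U=u, V=v, X=x) *)
Definition is_pmf3 (p : U -> V -> 'I_m -> R) :=
  (forall u v x, 0 <= p u v x) /\ \sum_u \sum_v \sum_x p u v x = 1.

Definition PU (p : U -> V -> 'I_m -> R) u := \sum_v \sum_x p u v x.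
Definition PV (p : U -> V -> 'I_m -> R) v := \sum_u \sum_x p u v x.
Definition PXgU (p : U -> V -> 'I_m -> R) k u := (\sum_v p u v k) / PU p u.
Definition PXgV (p : U -> V -> 'I_m -> R) k v := (\sum_u p u v k) / PV p v.

Definition pUVstar (p : U -> V -> 'I_m -> R) (ui : U * 'I_m) (vj : V * 'I_m) : R :=
  m%:R^-1 * p ui.1 vj.1 (subm (ui.2) (vj.2)).
Definition pXstar_cond (k : 'I_m) (ui : U * 'I_m) (vj : V * 'I_m) : R :=
  (k == subm (ui.2) (vj.2))%:R.
Definition pstar (p : U -> V -> 'I_m -> R) ui vj k :=
  pUVstar p ui vj * pXstar_cond k ui vj.

Definition PUstar p (ui : U * 'I_m) := \sum_(vj : V * 'I_m) \sum_k pstar p ui vj k.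
Definition PVstar p (vj : V * 'I_m) := \sum_(ui : U * 'I_m) \sum_k pstar p ui vj k.
Definition PXgUstar p k (ui : U * 'I_m) :=
  (\sum_(vj : V * 'I_m) pstar p ui vj k) / PUstar p ui.
Definition PXgVstar p k (vj : V * 'I_m) :=
  (\sum_(ui : U * 'I_m) pstar p ui vj k) / PVstar p vj.
End Defs.

(* Main.v *)
Require Import Defs.
From HB Require Import structures.
From mathcomp Require Import all_boot all_order all_algebra.
From mathcomp Require Import zify.
Import Order.TTheory GRing.Theory Num.Theory.
Local Open Scope ring_scope.

Lemma subm_val (m : nat) (i j : 'I_m) :
  val (subm i j) = if (j <= i)%N then (i - j)%N else (i + m - j)%N.
Proof.
rewrite /subm /=; have hi := ltn_ord i; have hj := ltn_ord j.
case: ifP => h.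
  have -> : (i + m - j = (i - j) + m)%N by lia.
  rewrite modnDr modn_small //; lia.
rewrite modn_small //; lia.
Qed.

Lemma subm_injr (m : nat) (i : 'I_m) : injective (subm i).
Proof.
move=> j1 j2 /(congr1 val); rewrite !subm_val => h; apply/val_inj => /=.
have := ltn_ord i; have := ltn_ord j1; have := ltn_ord j2.
move: h; case: ifP; case: ifP; lia.
Qed.

Lemma subm_injl (m : nat) (i : 'I_m) : injective (fun j : 'I_m => subm j i).
Proof.
move=> j1 j2 /(congr1 val); rewrite !subm_val => h; apply/val_inj => /=.
have := ltn_ord i; have := ltn_ord j1; have := ltn_ord j2.
move: h; case: ifP; case: ifP; lia.
Qed.

Lemma sum_pair (R : realFieldType) (A B : finType) (F : A * B -> R) :
  \sum_(x : A * B) F x = \sum_(a : A) \sum_(b : B) F (a, b).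
Proof. by rewrite pair_bigA; apply: eq_bigr => -[a b]. Qed.

Theorem lemma3p3 (R : realFieldType) (U V : finType) (m : nat)
  (p : U -> V -> 'I_m -> R) (hp : is_pmf3 p) :
  forall (u : U) (v : V) (i k : 'I_m),
    [/\ PUstar p (u, i) = m%:R^-1 * PU p u,
        PVstar p (v, i) = m%:R^-1 * PV p v,
        0 < PU p u -> PXgUstar p k (u, i) = PXgU p k u
      & 0 < PV p v -> PXgVstar p k (v, i) = PXgV p k v].
Proof.
move=> u v i k.
have m0 : (m%:R : R) != 0 by rewrite pnatr_eq0 -lt0n (ord_pos i).
have sumk : forall (a : R) (x : 'I_m), \sum_(k0 : 'I_m) a * (k0 == x)%:R = a.
  move=> a x; rewrite (bigD1 x) //= eqxx mulr1 big1 ?addr0 // => y /negbTE ->.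
  by rewrite mulr0.
have sumk' : forall (F : 'I_m -> R) (x : 'I_m), \sum_(k0 : 'I_m) F k0 * (k0 == x)%:R = F x.
  move=> F x; rewrite (bigD1 x) //= eqxx mulr1 big1 ?addr0 // => y /negbTE ->.
  by rewrite mulr0.
have EU : PUstar p (u, i) = m%:R^-1 * PU p u.
  rewrite /PUstar /pstar /pXstar_cond sum_pair /=.
  under eq_bigr => x _ do under eq_bigr => y _ do rewrite sumk.
  rewrite /PU mulr_sumr; apply: eq_bigr => x _; rewrite mulr_sumr.
  by rewrite [RHS](reindex_inj (@subm_injr m i)).
have EV : PVstar p (v, i) = m%:R^-1 * PV p v.
  rewrite /PVstar /pstar /pXstar_cond sum_pair /=.
  under eq_bigr => x _ do under eq_bigr => y _ do rewrite sumk.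
  rewrite /PV mulr_sumr; apply: eq_bigr => x _; rewrite mulr_sumr.
  by rewrite [RHS](reindex_inj (@subm_injl m i)).
split => // _.
  rewrite /PXgUstar EU /PXgU /pstar /pXstar_cond sum_pair /=.
  have -> : \sum_(x : V) \sum_(y : 'I_m) pUVstar p (u, i) (x, y) * (k == subm i y)%:R
     = m%:R^-1 * \sum_(x : V) p u x k.
    rewrite mulr_sumr; apply: eq_bigr => x _.
    transitivity (\sum_z m%:R^-1 * p u x z * (z == k)%:R); last by rewrite sumk'.
    rewrite [RHS](reindex_inj (@subm_injr m i)).
    by apply: eq_bigr => y _; rewrite /pUVstar /= (eq_sym k).
  by rewrite invfM invrK mulrACA (mulVf m0) mul1r.
rewrite /PXgVstar EV /PXgV /pstar /pXstar_cond sum_pair /=.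
have -> : \sum_(x : U) \sum_(y : 'I_m) pUVstar p (x, y) (v, i) * (k == subm y i)%:R
   = m%:R^-1 * \sum_(x : U) p x v k.
  rewrite mulr_sumr; apply: eq_bigr => x _.
  transitivity (\sum_z m%:R^-1 * p x v z * (z == k)%:R); last by rewrite sumk'.
  rewrite [RHS](reindex_inj (@subm_injl m i)).
  by apply: eq_bigr => y _; rewrite /pUVstar /= (eq_sym k).
by rewrite invfM invrK mulrACA (mulVf m0) mul1r.
Qed.
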